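(* Let $B\in\mathbb{R}^{n\times n}$ be symmetric, partitioned into $p\times p$ blocks $B_{st}\in\mathbb{R}^{n_s\times n_t}$, and let $\check B$ be its strictly block lower triangular part ($\check B_{st}=B_{st}$ if $s>t$, $0$ otherwise). If $\lambda_{\min}(B)<0$, then for every $\beta\in(0,\frac1{\rho(B)})$ the matrix $(I_n+\beta\check B)^{-1}B$ has at least one eigenvalue in $$\Omega=\{a+bi:\ a,b\in\mathbb{R},\ a\le 0,\ (a,b)\ne(0,0)\}.$$
   Context: $n_1,\dots,n_p$ are positive integers with $\sum_sn_s=n$; $\rho(B)$ denotes the spectral radius of $B$ and $\lambda_{\min}(B)$ its smallest eigenvalue. *)

(* Defs.v *)
From HB Require Import structures.
From mathcomp Require Import all_boot all_order all_algebra.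
From mathcomp Require Import complex.
Set Implicit Arguments. Unset Strict Implicit. Unset Printing Implicit Defensive.
Import Order.TTheory GRing.Theory Num.Theory.
Local Open Scope ring_scope.

Definition cmx (R : rcfType) (m n : nat) (A : 'M[R]_(m, n)) : 'M[R[i]]_(m, n) :=
  map_mx (fun x : R => Complex x 0) A.

Definition ceigen (R : rcfType) (n : nat) (A : 'M[R]_n) (a b : R) : bool :=
  eigenvalue (cmx A) (Complex a b).

Definition is_spectral_radius (R : rcfType) (n : nat) (A : 'M[R]_n) (r : R) : Prop :=
  (exists a b : R, ceigen A a b /\ r = Num.sqrt (a ^+ 2 + b ^+ 2)) /\
  (forall a b : R, ceigen A a b -> Num.sqrt (a ^+ 2 + b ^+ 2) <= r).

(* l is the smallest eigenvalue of A (used for symmetric A, whose eigenvalues are real). *)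
Definition is_lambda_min (R : rcfType) (n : nat) (A : 'M[R]_n) (l : R) : Prop :=
  eigenvalue A l /\ (forall m : R, eigenvalue A m -> l <= m).

Definition block_strict_lower (R : pzRingType) (p : nat) (ns : 'I_p -> nat)
    (B : 'M[R]_(\sum_(s < p) ns s)) : 'M[R]_(\sum_(s < p) ns s) :=
  \mxblock_(s < p, t < p) (if (t < s)%N then submxblock B s t else 0).

(* Main.v *)
Require Import Defs.
From HB Require Import structures.
From mathcomp Require Import all_boot all_order all_algebra.
From mathcomp Require Import complex spectral.
From mathcomp Require Import ring lra.
Set Implicit Arguments. Unset Strict Implicit. Unset Printing Implicit Defensive.
Import Order.TTheory GRing.Theory Num.Theory Num.Def.
Local Open Scope ring_scope.

Section QF.
Variable C : numClosedFieldType.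

Definition adj m n (A : 'M[C]_(m, n)) : 'M[C]_(n, m) := map_mx conjC A^T.
Definition qf n (A : 'M[C]_n) (x : 'rV[C]_n) : C := (x *m A *m adj x) 0 0.

Lemma adjE m n (A : 'M[C]_(m, n)) i j : adj A i j = (A j i)^*.
Proof. by rewrite !mxE. Qed.

Lemma adjK m n (A : 'M[C]_(m, n)) : adj (adj A) = A.
Proof. by apply/matrixP => i j; rewrite !adjE conjCK. Qed.

Lemma adjM m n p (A : 'M[C]_(m, n)) (B : 'M[C]_(n, p)) : adj (A *m B) = adj B *m adj A.
Proof. by rewrite /adj trmx_mul map_mxM. Qed.

Lemma adjD m n (A B : 'M[C]_(m, n)) : adj (A + B) = adj A + adj B.
Proof. by apply/matrixP => i j; rewrite !mxE rmorphD. Qed.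

Lemma adjN m n (A : 'M[C]_(m, n)) : adj (- A) = - adj A.
Proof. by apply/matrixP => i j; rewrite !mxE rmorphN. Qed.

Lemma adjB m n (A B : 'M[C]_(m, n)) : adj (A - B) = adj A - adj B.
Proof. by rewrite adjD adjN. Qed.

Lemma adjZ m n a (A : 'M[C]_(m, n)) : adj (a *: A) = a^* *: adj A.
Proof. by apply/matrixP => i j; rewrite !mxE rmorphM. Qed.

Lemma adj0 m n : adj (0 : 'M[C]_(m, n)) = 0.
Proof. by apply/matrixP => i j; rewrite !mxE rmorph0. Qed.

Lemma adj_scalar n a : adj (a%:M : 'M[C]_n) = (a^*)%:M.
Proof. by apply/matrixP => i j; rewrite !mxE eq_sym; case: eqP; rewrite ?mulr1n ?mulr0n ?rmorph0. Qed.

Lemma adj_block m1 m2 n1 n2 (a : 'M[C]_(m1, n1)) (b : 'M[C]_(m1, n2))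
  (c : 'M[C]_(m2, n1)) (d : 'M[C]_(m2, n2)) :
  adj (block_mx a b c d) = block_mx (adj a) (adj c) (adj b) (adj d).
Proof. by rewrite /adj tr_block_mx map_block_mx. Qed.

Lemma adj_row m n1 n2 (a : 'M[C]_(m, n1)) (b : 'M[C]_(m, n2)) :
  adj (row_mx a b) = col_mx (adj a) (adj b).
Proof. by rewrite /adj tr_row_mx map_col_mx. Qed.

Lemma mx11M (a b : 'M[C]_1) : (a *m b) 0 0 = a 0 0 * b 0 0.
Proof. by rewrite mxE big_ord1. Qed.

Lemma qf_conj n (A : 'M[C]_n) x : (qf A x)^* = qf (adj A) x.
Proof. by rewrite /qf -adjE !adjM adjK mulmxA. Qed.

Lemma qfD n (A B : 'M[C]_n) x : qf (A + B) x = qf A x + qf B x.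
Proof. by rewrite /qf mulmxDr mulmxDl mxE. Qed.

Lemma qfN n (A : 'M[C]_n) x : qf (- A) x = - qf A x.
Proof. by rewrite /qf mulmxN mulNmx mxE. Qed.

Lemma qfB n (A B : 'M[C]_n) x : qf (A - B) x = qf A x - qf B x.
Proof. by rewrite qfD qfN. Qed.

Lemma qfZ n a (A : 'M[C]_n) x : qf (a *: A) x = a * qf A x.
Proof. by rewrite /qf -scalemxAr -scalemxAl mxE. Qed.

Lemma qf0 n (A : 'M[C]_n) : qf A 0 = 0.
Proof. by rewrite /qf !mul0mx mxE. Qed.

Lemma qf_rank1 n (c : 'cV[C]_n) (r : 'rV[C]_n) x :
  qf (c *m r) x = (x *m c) 0 0 * (r *m adj x) 0 0.
Proof. by rewrite /qf !mulmxA -mx11M !mulmxA. Qed.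

Lemma qf_conjmx m n (S : 'M[C]_(m, n)) (A : 'M[C]_m) x :
  qf (adj S *m A *m S) x = qf A (x *m adj S).
Proof. by rewrite /qf adjM adjK !mulmxA. Qed.

Lemma qf1E n (x : 'rV[C]_n) : qf 1%:M x = \sum_i x 0 i * (x 0 i)^*.
Proof. by rewrite /qf mulmx1 mxE; apply: eq_bigr => i _; rewrite adjE. Qed.

Lemma qf1_ge0 n (x : 'rV[C]_n) : 0 <= qf 1%:M x.
Proof. by rewrite qf1E sumr_ge0 // => i _; exact: mul_conjC_ge0. Qed.

Lemma qf1_gt0 n (x : 'rV[C]_n) : x != 0 -> 0 < qf 1%:M x.
Proof.
move=> nx; rewrite lt_def qf1_ge0 andbT; apply: contra nx; rewrite qf1E => /eqP.
move/psumr_eq0P => H; apply/eqP/rowP => i; rewrite mxE.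
by apply/eqP; rewrite -mul_conjC_eq0; apply/eqP; apply: H => // j _; exact: mul_conjC_ge0.
Qed.

Lemma qf_block k (a u : C) (b v : 'rV[C]_k) (c : 'cV[C]_k) (D : 'M[C]_k) :
  qf (block_mx a%:M b c D) (row_mx u%:M v) =
  u * a * u^* + (v *m c) 0 0 * u^* + u * (b *m adj v) 0 0 + qf D v.
Proof.
rewrite /qf adj_row mul_row_block mul_row_col adj_scalar !mulmxDl mxE [X in X + _ = _]mxE.
rewrite -scalar_mxM !mul_mx_scalar !mul_scalar_mx !mxE eqxx mulr1n.
have -> : \sum_j (u *: b) 0 j * adj v j 0 = u * \sum_j b 0 j * adj v j 0.
  by rewrite big_distrr; apply: eq_bigr => j _; by rewrite !mxE; rewrite /= mulrA.
ring.
Qed.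


Definition Rpd n (G : 'M[C]_n) := forall x, x != 0 -> 0 < 'Re (qf G x).
Definition utrig n (T : 'M[C]_n) := forall i j : 'I_n, (j < i)%N -> T i j = 0.
Definition gooddiag n (T : 'M[C]_n) := forall i, T i i = 0 \/ 0 < 'Re (T i i).

Lemma core_step k
  (IH : forall (H G T : 'M[C]_k), adj H = H -> Rpd G -> utrig T -> gooddiag T ->
        H = G *m T -> forall x, 0 <= qf H x)
  (eta gam tau : C) (hr gr t : 'rV[C]_k) (hc gc : 'cV[C]_k) (H' G' T' : 'M[C]_k) :
  adj (block_mx eta%:M hr hc H') = block_mx eta%:M hr hc H' ->
  Rpd (block_mx gam%:M gr gc G') -> utrig T' -> gooddiag T' ->
  (tau = 0 \/ 0 < 'Re tau) ->
  block_mx eta%:M hr hc H' = block_mx gam%:M gr gc G' *m block_mx tau%:M t 0 T' ->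
  forall x, 0 <= qf (block_mx eta%:M hr hc H') x.
Proof.
move=> Hh Gp T't T'd taud.
rewrite mulmx_block => /eq_block_mx [e1 e2 e3 e4].
move: e1 e2 e3 e4; rewrite !mulmx0 !addr0 -scalar_mxM !mul_scalar_mx !mul_mx_scalar.
move=> e1 e2 e3 e4.
have {}e1 : eta = gam * tau by have := congr1 (fun M : 'M[C]_1 => M 0 0) e1; rewrite !mxE eqxx !mulr1n.
move: Hh; rewrite adj_block adj_scalar => /eq_block_mx [h1 h2 h3 h4].
have {}h1 : eta^* = eta by have := congr1 (fun M : 'M[C]_1 => M 0 0) h1; rewrite !mxE eqxx !mulr1n.
have gam_pos : 0 < 'Re gam.
  have := Gp (row_mx (1%:M) 0); rewrite qf_block mul0mx adj0 mulmx0 !mxE qf0 conjC1 !mulr1 !mul1r !addr0.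
  apply; apply/eqP => /eqP; rewrite row_mx_eq0 => /andP [/eqP + _].
  by move/matrixP/(_ 0 0); rewrite !mxE eqxx /= => /eqP; rewrite oner_eq0.
have gam0 : gam != 0 by apply: contraTneq gam_pos => ->; rewrite raddf0 ltxx.
pose ig := gam^-1.
pose G'' := G' - ig *: (gc *m gr).
pose H'' := H' - eta^-1 *: (hc *m hr).
have key : ig *: (gc *m hr) = eta^-1 *: (hc *m hr).
  have [tau0|taun0] := eqVneq tau 0.
    have hc0 : hc = 0 by rewrite e3 tau0 scale0r.
    have hr0 : hr = 0 by rewrite -h2 hc0 adj0.
    by rewrite hr0 !mulmx0 !scaler0.
  rewrite e3 -scalemxAl scalerA e1 invfM /ig; congr (_ *: _).
  by rewrite mulfVK.
have HGT'' : H'' = G'' *m T'.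
  rewrite /H'' -key /G'' e2 e4 mulmxDr -scalemxAr scalerDr scalerA mulVf // scale1r mulmxBl -scalemxAl mulmxA.
  by rewrite opprD addrACA subrr add0r.
have Hh'' : adj H'' = H''.
  rewrite /H'' adjB h4 adjZ adjM h3 h2; by rewrite fmorphV /= h1.
have Gp'' : Rpd G''.
  move=> x' x'0.
  pose s := (x' *m gc) 0 0.
  pose u := - (ig * s).
  have := Gp (row_mx u%:M x'); rewrite qf_block.
  have ug : u * gam + s = 0 by rewrite /u /ig mulNr mulrAC mulVf // mul1r addNr.
  rewrite -mulrDl ug mul0r add0r /G'' qfB qfZ qf_rank1 -/s => H.
  have -> : qf G' x' - ig * (s * (gr *m adj x') 0 0) = u * (gr *m adj x') 0 0 + qf G' x'.
    by rewrite /u addrC mulNr mulrA.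
  apply: H; apply/eqP => /eqP; rewrite row_mx_eq0 => /andP [_ /eqP x'0'].
  by rewrite x'0' eqxx in x'0.
have IH'' := IH H'' G'' T' Hh'' Gp'' T't T'd HGT''.
move=> x; rewrite -(hsubmxK x) (mx11_scalar (lsubmx x)).
set a := lsubmx x 0 0; set x' := rsubmx x.
rewrite qf_block.
set p := (x' *m hc) 0 0.
have hrp : (hr *m adj x') 0 0 = p^*.
  by rewrite -h2 -adjM adjE.
rewrite hrp.
have [tau0|taun0] := eqVneq tau 0.
  have hc0 : hc = 0 by rewrite e3 tau0 scale0r.
  have eta0 : eta = 0 by rewrite e1 tau0 mulr0.
  have : H'' = H' by rewrite /H'' hc0 mul0mx scaler0 subr0.
  move=> HH; move: IH''; rewrite HH => IH''.
  by rewrite /p hc0 mulmx0 mxE rmorph0 eta0 !mulr0 !mul0r !add0r.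
have tau_pos : 0 < 'Re tau by case: taud => // /eqP; rewrite (negPf taun0).
have eta0 : eta != 0 by rewrite e1 mulf_neq0.
have eta_real : eta \is Num.real by rewrite CrealE h1.
have eta_pos : 0 < eta.
  have etau : tau = eta * ig by rewrite e1 /ig mulrC mulrA mulVf // mul1r.
  move: tau_pos; rewrite etau ReM (Creal_ImP _ eta_real) mul0r subr0 (Creal_ReP _ eta_real).
  by rewrite pmulr_lgt0 // /ig ReV divr_gt0 // exprn_gt0 // normr_gt0.
have -> : a * eta * a^* + p * a^* + a * p^* + qf H' x' =
   eta * ((a + eta^-1 * p) * (a + eta^-1 * p)^*) + qf H'' x'.
  rewrite /H'' qfB qfZ qf_rank1 -/p hrp rmorphD rmorphM fmorphV /= h1.
  by field.
apply: addr_ge0; last exact: IH''.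
by apply: mulr_ge0; [exact: ltW | exact: mul_conjC_ge0].
Qed.


Lemma ul11 k (A : 'M[C]_(1 + k)) : ulsubmx A = (A 0 0)%:M.
Proof. rewrite [LHS]mx11_scalar !mxE; congr (_%:M); rewrite (_ : lshift k 0 = 0) //; exact: val_inj. Qed.

Lemma blockE k (A : 'M[C]_(1 + k)) :
  block_mx (A 0 0)%:M (ursubmx A) (dlsubmx A) (drsubmx A) = A.
Proof. by rewrite -ul11 submxK. Qed.

Lemma core k : forall (H G T : 'M[C]_k), adj H = H -> Rpd G -> utrig T -> gooddiag T ->
  H = G *m T -> forall x, 0 <= qf H x.
Proof.
elim: k => [|k IH] H G T Hh Gp Tt Td HGT.
  by move=> x; rewrite /qf mxE big_ord0.
pose H1 : 'M[C]_(1 + k) := H.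
pose G1 : 'M[C]_(1 + k) := G.
pose T1 : 'M[C]_(1 + k) := T.
have eT : block_mx (T1 0 0)%:M (ursubmx T1) 0 (drsubmx T1) = T1.
  rewrite -[RHS]blockE; congr block_mx; apply/matrixP => i j; rewrite !mxE.
  by rewrite Tt //; exact: leq_trans (ltn_ord j) (leq_addr _ _).
have := @core_step k IH (H1 0 0) (G1 0 0) (T1 0 0) (ursubmx H1) (ursubmx G1) (ursubmx T1)
  (dlsubmx H1) (dlsubmx G1) (drsubmx H1) (drsubmx G1) (drsubmx T1).
rewrite !blockE eT; apply => //.
- by move=> i j lt_ji; rewrite !mxE Tt // /= ltn_add2l.
- by move=> i; rewrite !mxE; apply: Td.
Qed.

End QF.

Lemma ReB (C : numClosedFieldType) (w r : C) : `|w| <= r -> - r <= 'Re w /\ 'Re w <= r.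
Proof.
move=> h; have h1 : `|'Re w| <= r.
  by apply: le_trans h; have := leif_normC_Re_Creal w; case.
by move: h1; rewrite real_ler_norml ?Creal_Re // => /andP [].
Qed.

Section Real.
Variable R : rcfType.
Local Notation C := (R[i]).
Local Notation toC := (real_complex R).

Lemma cmxE m n (A : 'M[R]_(m, n)) i j : cmx A i j = toC (A i j).
Proof. by rewrite mxE. Qed.

Lemma cmx_map m n (A : 'M[R]_(m, n)) : cmx A = map_mx (real_complex R) A.
Proof. by apply/matrixP => i j; rewrite !mxE. Qed.

Lemma conj_rc (x : R) : (toC x)^* = toC x :> C.
Proof. by rewrite conj_Creal // complex_real. Qed.

Lemma adj_cmx m n (A : 'M[R]_(m, n)) : adj (cmx A) = cmx A^T.
Proof. by apply/matrixP => i j; rewrite adjE !mxE conj_rc. Qed.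

Lemma qfE n (A : 'M[C]_n) x : qf A x = \sum_i \sum_j x 0 i * A i j * (x 0 j)^*.
Proof.
rewrite /qf mxE (eq_bigr (fun j => \sum_i x 0 i * A i j * (x 0 j)^*)); last first.
  by move=> j _; rewrite mxE big_distrl; apply: eq_bigr => i _; rewrite adjE.
exact: exchange_big.
Qed.

Lemma qf_diag n (d : 'rV[C]_n) x : qf (diag_mx d) x = \sum_i d 0 i * (x 0 i * (x 0 i)^*).
Proof.
rewrite /qf mxE; apply: eq_bigr => i _; rewrite adjE mul_mx_diag mxE; ring.
Qed.

Lemma rayleigh n (B : 'M[R]_n) rho : B^T = B -> is_spectral_radius B rho ->
  forall x, `|qf (cmx B) x| <= toC rho * qf 1%:M x.
Proof.
move=> Bs [_ Hrho] x.
set cB := cmx B.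
have herm : adj cB = cB by rewrite /cB adj_cmx Bs.
have normal : cB \is normalmx by apply/normalmxP; rewrite -/(adj cB) herm.
have := orthomx_spectralP normal.
set P := spectralmx cB; set d := spectral_diag cB => eB.
have Pu : P \is unitarymx by exact: spectral_unitarymx.
have Punit : P \in unitmx by exact: unitarymx_unit.
have aP : adj P = invmx P by rewrite invmx_unitary.
have eB' : cB = adj P *m diag_mx d *m P by rewrite {1}eB aP.
have q1 : qf 1%:M x = qf 1%:M (x *m adj P).
  by rewrite -qf_conjmx mulmx1 aP mulVmx.
rewrite eB' qf_conjmx q1 qf_diag qf1E mulr_sumr.
apply: le_trans (ler_norm_sum _ _ _) _; apply: ler_sum => i _.
rewrite normrM (ger0_norm (mul_conjC_ge0 _)); apply: ler_wpM2r; first exact: mul_conjC_ge0.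
have ev : eigenvalue cB (d 0 i).
  apply/eigenvalueP; exists (row i P).
    rewrite -row_mul {1}eB !mulmxA mulmxV // mul1mx.
    by rewrite mul_diag_mx; apply/rowP => j; rewrite !mxE.
  rewrite rowE; apply/eqP => /(congr1 (mulmx^~ (invmx P))); rewrite mulmxK // mul0mx.
  by move/matrixP/(_ 0 i); rewrite !mxE !eqxx /= => /eqP; rewrite oner_eq0.
move: ev; case: (d 0 i) => a b ev.
have := Hrho a b ev; rewrite normc_def /= -lecR; exact.
Qed.


Lemma bsl_entry p (ns : 'I_p -> nat) (B : 'M[R]_(\sum_(s < p) ns s)) i j :
  block_strict_lower B i j =
  if (tagnat.sig1 j < tagnat.sig1 i)%N then B i j else 0.
Proof.
rewrite /block_strict_lower /mxblock mxE; case: ifP => _; last by rewrite mxE.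
by rewrite /submxblock mxE !tagnat.sig2K.
Qed.

Definition bdiag p (ns : 'I_p -> nat) (B : 'M[R]_(\sum_(s < p) ns s)) :
  'M[R]_(\sum_(s < p) ns s) :=
  \matrix_(i, j) if tagnat.sig1 i == tagnat.sig1 j then B i j else 0.

Lemma addtrE n (A D : 'M[R]_n) i j : (A + D^T) i j = A i j + D j i.
Proof. by rewrite !mxE. Qed.
Lemma subE n (A D : 'M[R]_n) i j : (A - D) i j = A i j - D i j.
Proof. by rewrite !mxE. Qed.

Lemma bsl_sym p (ns : 'I_p -> nat) (B : 'M[R]_(\sum_(s < p) ns s)) : B^T = B ->
  block_strict_lower B + (block_strict_lower B)^T = B - bdiag B.
Proof.
move=> Bs; apply/matrixP => i j; rewrite addtrE subE !bsl_entry mxE.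
have Bji : B j i = B i j by have := congr1 (fun M : 'M[R]_(\sum_(s < p) ns s) => M i j) Bs; rewrite mxE.
rewrite Bji -val_eqE /=.
case: ltngtP => h1; rewrite ?subr0 ?subrr ?add0r ?addr0 //.
Qed.

Lemma dbound p (ns : 'I_p -> nat) (B : 'M[R]_(\sum_(s < p) ns s)) rho :
  B^T = B -> is_spectral_radius B rho ->
  forall x, `|qf (cmx (bdiag B)) x| <= toC rho * qf 1%:M x.
Proof.
move=> Bs Hr x.
pose xs (s : 'I_p) : 'rV[C]_(\sum_(s < p) ns s) :=
  \row_i (if tagnat.sig1 i == s then x 0 i else 0).
have e1 : qf (cmx (bdiag B)) x = \sum_s qf (cmx B) (xs s).
  rewrite qfE (eq_bigr (fun s => \sum_i \sum_j xs s 0 i * cmx B i j * (xs s 0 j)^*));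
    last by move=> s _; rewrite qfE.
  rewrite [RHS]exchange_big; apply: eq_bigr => i _; rewrite [RHS]exchange_big; apply: eq_bigr => j _.
  rewrite [RHS](bigD1 (tagnat.sig1 i)) //= [X in _ = _ + X]big1 ?addr0; last first.
    by move=> s /negPf ns0; rewrite !mxE eq_sym ns0 !mul0r.
  rewrite !mxE eqxx [tagnat.sig1 j == _]eq_sym; case: ifP => _ //.
  by rewrite (_ : Complex (0:R) 0 = 0) // conjC0 !mulr0 mul0r.
have e2 : qf 1%:M x = \sum_s qf 1%:M (xs s).
  rewrite qf1E (eq_bigr (fun s => \sum_i xs s 0 i * (xs s 0 i)^*)); last by move=> s _; rewrite qf1E.
  rewrite [RHS]exchange_big; apply: eq_bigr => i _.
  rewrite [RHS](bigD1 (tagnat.sig1 i)) //= [X in _ = _ + X]big1 ?addr0; last first.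
    by move=> s /negPf ns0; rewrite !mxE eq_sym ns0 !mul0r.
  by rewrite !mxE eqxx.
rewrite e1 e2 mulr_sumr; apply: le_trans (ler_norm_sum _ _ _) _.
by apply: ler_sum => s _; exact: rayleigh.
Qed.

Lemma cmx1 n : cmx (1%:M : 'M[R]_n) = 1%:M.
Proof. by rewrite cmx_map map_mx1. Qed.
Lemma cmxD m n (A B : 'M[R]_(m, n)) : cmx (A + B) = cmx A + cmx B.
Proof. by rewrite !cmx_map map_mxD. Qed.
Lemma cmxB m n (A B : 'M[R]_(m, n)) : cmx (A - B) = cmx A - cmx B.
Proof. by rewrite !cmx_map map_mxB. Qed.
Lemma cmxZ m n a (A : 'M[R]_(m, n)) : cmx (a *: A) = toC a *: cmx A.
Proof. by rewrite !cmx_map map_mxZ. Qed.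
Lemma cmxM m n k (A : 'M[R]_(m, n)) (B : 'M[R]_(n, k)) : cmx (A *m B) = cmx A *m cmx B.
Proof. by rewrite !cmx_map map_mxM. Qed.
Lemma cmxV n (A : 'M[R]_n) : cmx (invmx A) = invmx (cmx A).
Proof. by rewrite !cmx_map map_invmx. Qed.

Lemma toC_real (a : R) : toC a \is Num.real.
Proof. by rewrite complex_real. Qed.

Lemma Apd p (ns : 'I_p -> nat) (B : 'M[R]_(\sum_(s < p) ns s)) rho beta :
  B^T = B -> is_spectral_radius B rho -> 0 < beta -> beta * rho < 1 ->
  Rpd (cmx (1%:M + beta *: block_strict_lower B)).
Proof.
move=> Bs Hr b0 br x x0.
set L := block_strict_lower B.
rewrite cmxD cmx1 cmxZ qfD qfZ raddfD /=.
set q := qf 1%:M x.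
have q0 : 0 < q by exact: qf1_gt0.
have -> : 'Re q = q by apply/Creal_ReP; rewrite ger0_real // ltW.
set z := qf (cmx L) x.
have -> : 'Re (toC beta * z) = toC beta * 'Re z.
  by rewrite ReM (Creal_ImP _ (toC_real _)) mul0r subr0 (Creal_ReP _ (toC_real _)).
have hz : 'Re z *+ 2 = 'Re (qf (cmx B) x) - 'Re (qf (cmx (bdiag B)) x).
  rewrite -raddfB -qfB -cmxB -bsl_sym // cmxD -adj_cmx qfD -qf_conj raddfD /= Re_conj.
  by rewrite mulr2n.
have [h1 _] := ReB (rayleigh Bs Hr x).
have [_ h2] := ReB (dbound Bs Hr x).
have h3 := lerB h1 h2.
rewrite -hz in h3.
set r := toC rho in h3 *.
have hz2 : - (r * q) <= 'Re z.
  have : (- (r * q) - r * q) / 2%:R <= 'Re z *+ 2 / 2%:R.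
    by apply: ler_wpM2r => //; rewrite invr_ge0 ler0n.
  have two : (2%:R : C) != 0 by rewrite pnatr_eq0.
  have -> : (- (r * q) - r * q) / 2%:R = - (r * q) by field.
  by have -> : 'Re z *+ 2 / 2%:R = 'Re z by rewrite -mulr_natr; field.
have bpos : 0 < toC beta by rewrite -(rmorph0 (real_complex R)) ltcR.
apply: lt_le_trans (_ : 0 < q - toC beta * r * q) _.
  rewrite -{1}(mul1r q) -mulrBl pmulr_lgt0 // subr_gt0 /r -rmorphM -(rmorph1 (real_complex R)).
  by rewrite ltcR.
rewrite -mulrA -mulrN lerD2l; apply: ler_wpM2l => //; exact: ltW.
Qed.

End Real.

Lemma char_poly_tr (F : fieldType) n (A : 'M[F]_n) : char_poly A^T = char_poly A.
Proof.
rewrite /char_poly -det_tr; congr (\det _); apply/matrixP => i j.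
by rewrite !mxE eq_sym.
Qed.

Lemma eig_tr (F : fieldType) n (A : 'M[F]_n) a : eigenvalue A^T a = eigenvalue A a.
Proof. by rewrite !eigenvalue_root_char char_poly_tr. Qed.

Lemma trig_diag_eig (C : numClosedFieldType) n (M : 'M[C]_n) : (0 < n)%N ->
  exists2 S : 'M[C]_n, S \in unitmx &
    utrig (invmx S *m M *m S) /\ forall i, eigenvalue M ((invmx S *m M *m S) i i).
Proof.
move=> n0; have [P Pu PT] := Schur M^T n0.
have Punit : P \in unitmx by exact: unitarymx_unit.
move: PT; rewrite /similar_to /= conjumx // => /is_trig_mxP Lt.
set L := P *m M^T *m invmx P in Lt.
have eT : invmx P^T *m M *m P^T = L^T.
  by rewrite /L !trmx_mul trmxK trmx_inv mulmxA.
exists P^T; first by rewrite unitmx_tr.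
rewrite eT; split.
  by move=> i j lt_ji; rewrite mxE Lt.
move=> i; rewrite mxE -eig_tr.
have : eigenvalue L (L i i).
  rewrite eigenvalue_root_char char_poly_trig; last by apply/is_trig_mxP.
  by rewrite /root horner_prod (bigD1 i) //= hornerXsubC subrr mul0r.
move/eigenvalueP => [v vL v0]; apply/eigenvalueP; exists (v *m P).
  by rewrite -mulmxA -[P *m M^T](mulmxKV Punit) -/L mulmxA vL -scalemxAl.
apply: contra v0 => /eqP vP0; apply/eqP.
by rewrite -[v](mulmxK Punit) vP0 mul0mx.
Qed.

Unset Implicit Arguments.
Set Strict Implicit.

Theorem lemma14 (R : rcfType) (p : nat) (ns : 'I_p -> nat)
    (ns_pos : forall s, (0 < ns s)%N)
    (B : 'M[R]_(\sum_(s < p) ns s))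
    (Bsym : B^T = B)
    (lmin : R) (Hlmin : is_lambda_min B lmin) (Hneg : lmin < 0)
    (rho : R) (Hrho : is_spectral_radius B rho)
    (beta : R) (Hbeta0 : 0 < beta) (Hbeta1 : beta < rho^-1) :
  exists a b : R,
    ceigen (invmx (1%:M + beta *: block_strict_lower B) *m B) a b /\
    a <= 0 /\ (a, b) != (0, 0).
Proof.
have [Hev _] := Hlmin.
have [w wB w0] := eigenvalueP Hev.
have npos : (0 < \sum_(s < p) ns s)%N.
  case: posnP => // n0; exfalso; move/negP: w0; apply; apply/eqP/rowP => i.
  by have := leq_trans (ltn_ord i) (eq_leq n0); rewrite ltn0.
have rho0 : 0 <= rho.
  by have [[a [b [_ ->]]] _] := Hrho; exact: sqrtr_ge0.
have brho : beta * rho < 1.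
  move: rho0; rewrite le_eqVlt => /orP [/eqP r0|rpos].
    by move: Hbeta1; rewrite -r0 invr0 => /(lt_trans Hbeta0); rewrite ltxx.
  by rewrite -ltr_pdivlMr // mul1r.
set L := block_strict_lower B.
set A := 1%:M + beta *: L.
have Gp0 : Rpd (cmx A) := Apd Bsym Hrho Hbeta0 brho.
have cAu : cmx A \in unitmx.
  case: (boolP (cmx A \in unitmx)) => // nu; exfalso.
  have : \det (cmx A) == 0 by move: nu; rewrite unitmxE unitfE negbK.
  move/det0P => [v v0 vA].
  have := Gp0 v v0; rewrite /qf vA mul0mx mxE raddf0 ltxx //.
set M := cmx (invmx A *m B).
have eM : cmx A *m M = cmx B by rewrite /M cmxM cmxV mulmxA mulmxV // mul1mx.
have [S Su [Tt Tev]] := trig_diag_eig M npos.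
set T := invmx S *m M *m S in Tt Tev.
pose G := adj S *m cmx A *m S.
pose H := adj S *m cmx B *m S.
have HGT : H = G *m T.
  by rewrite /G /T !mulmxA (mulmxK Su) -(mulmxA _ (cmx A)) eM.
have Hh : adj H = H by rewrite /H !adjM adjK adj_cmx Bsym mulmxA.
have aSu : adj S \in unitmx by rewrite /adj map_unitmx unitmx_tr.
have GP : Rpd G.
  move=> x x0; rewrite /G qf_conjmx; apply: Gp0.
  apply: contra x0 => /eqP xS; apply/eqP.
  by rewrite -[x](mulmxK aSu) xS mul0mx.
case: (pickP (fun i => ('Re (T i i) <= 0) && (T i i != 0))) => [i /andP [Hre Hne] | Hn].
  have ev := Tev i; move: Hre Hne ev; case: (T i i) => a b Hre Hne ev.
  exists a, b; split; first exact: ev.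
  split; first by move: Hre; rewrite -complexRe lecE /= => /andP [].
  by apply: contra Hne; rewrite xpair_eqE => /andP [/eqP -> /eqP ->].
have gd : gooddiag T.
  move=> i; have := Hn i; case: (eqVneq (T i i) 0) => [-> _|ne]; first by left.
  rewrite andbT => /negbT Hre; right.
  by rewrite real_ltNge ?real0 ?Creal_Re.
have Hpos := core Hh GP Tt gd HGT (cmx w *m invmx (adj S)).
have cw0 : cmx w != 0 by rewrite cmx_map map_mx_eq0.
move: Hpos; rewrite /H qf_conjmx (mulmxKV aSu).
have -> : qf (cmx B) (cmx w) = real_complex R lmin * qf 1%:M (cmx w).
  by rewrite /qf -cmxM wB cmxZ -scalemxAl mxE mulmx1.
have neg : real_complex R lmin * qf 1%:M (cmx w) < 0.
  by rewrite pmulr_llt0 ?qf1_gt0 // -(rmorph0 (real_complex R)) ltcR.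
by move=> /(le_gtF); rewrite neg.
Qed.
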